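(* Let $\mathcal{S}\subseteq 2^{[n]}$ be a Sperner family and let $A\subseteq[n]$ be a fixed set. Define $h_A:\mathcal{S}\to 2^{[n]}$ by $h_A(S)=S\cap A$. Then $\mathcal{F}(\mathcal{S},h_A)$ is s-extremal. Moreover, if $\mathcal{F}(\mathcal{S},h_A)\neq 2^{[n]}$, then there exists a set $F\subseteq[n]$ with $F\notin\mathcal{F}(\mathcal{S},h_A)$ such that $\mathcal{F}'=\mathcal{F}(\mathcal{S},h_A)\cup\{F\}$ is again s-extremal, and furthermore $\mathcal{F}'=\mathcal{F}(\mathcal{S}',h_A)$ for some suitable Sperner family $\mathcal{S}'\subseteq 2^{[n]}$ (where $h_A(S)=S\cap A$ on $\mathcal{S}'$).
   Context: $[n]=\{1,\dots,n\}$. A family $\mathcal{S}\subseteq 2^{[n]}$ is a Sperner family if no member is contained in another member. A family $\mathcal{F}\subseteq 2^{[n]}$ shatters $S\subseteq[n]$ if $\{F\cap S: F\in\mathcal{F}\}=2^S$; $\mathrm{Sh}(\mathcal{F})$ denotes the family of sets shattered by $\mathcal{F}$. $\mathcal{F}$ is s-extremal if $|\mathrm{Sh}(\mathcal{F})|=|\mathcal{F}|$. For $H\subseteq S\subseteq[n]$ let $\mathcal{Q}_{S,H}=\{H\cup B: B\subseteq [n]\setminus S\}$ (the sets whose intersection with $S$ is $H$). For a Sperner family $\mathcal{S}$ and a function $h:\mathcal{S}\to 2^{[n]}$ with $h(S)\subseteq S$ for all $S\in\mathcal{S}$, put $\mathcal{F}(\mathcal{S},h)=2^{[n]}\setminus\bigcup_{S\in\mathcal{S}}\mathcal{Q}_{S,h(S)}$.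 *)

(* Defs.v *)
From mathcomp Require Import all_boot.
Set Implicit Arguments. Unset Strict Implicit. Unset Printing Implicit Defensive.

Definition sperner (n : nat) (Sp : {set {set 'I_n}}) : Prop :=
  forall S T, S \in Sp -> T \in Sp -> S \subset T -> S = T.

Definition shatters (n : nat) (F : {set {set 'I_n}}) (S : {set 'I_n}) : bool :=
  [set X :&: S | X in F] == powerset S.

Definition Sh (n : nat) (F : {set {set 'I_n}}) : {set {set 'I_n}} :=
  [set S | shatters F S].

Definition s_extremal (n : nat) (F : {set {set 'I_n}}) : Prop :=
  #|Sh F| = #|F|.

(* Q_{S,H} = { X ⊆ [n] : X ∩ S = H } = { H ∪ B : B ⊆ [n] \ S } when H ⊆ S *)
Definition Q (n : nat) (S H : {set 'I_n}) : {set {set 'I_n}} :=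
  [set H :|: B | B in powerset (~: S)].

Definition Fam (n : nat) (Sp : {set {set 'I_n}}) (h : {set 'I_n} -> {set 'I_n})
  : {set {set 'I_n}} :=
  ~: \bigcup_(S in Sp) Q S (h S).

Definition hA (n : nat) (A : {set 'I_n}) (S : {set 'I_n}) : {set 'I_n} := S :&: A.

(* Main.v *)
Require Import Defs.
From mathcomp Require Import all_boot.
Set Implicit Arguments. Unset Strict Implicit.

Section Aux.
Variable n : nat.
Variable A : {set 'I_n}.

Definition phi (X : {set 'I_n}) : {set 'I_n} := [set i | (i \in X) == (i \in A)].

Lemma phiK : involutive phi.
Proof. move=> X; apply/setP => i; rewrite !inE; by case: (i \in X); case: (i \in A). Qed.

Lemma phi_inj : injective phi.
Proof. exact: inv_inj phiK. Qed.

Lemma keyL X S : (X :&: S == S :&: A) = (S \subset phi X).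
Proof.
apply/eqP/subsetP => [H i iS | H].
  move/setP: H => /(_ i); rewrite !inE iS andbT /= => ->.
  by rewrite eqxx.
apply/setP => i; rewrite !inE; case iS: (i \in S); rewrite ?andbF ?andbT //.
by have := H i iS; rewrite inE => /eqP.
Qed.

Lemma inQ X S : (X \in Q S (S :&: A)) = (X :&: S == S :&: A).
Proof.
apply/imsetP/eqP => [[B] | H].
  rewrite inE => /subsetP sB ->.
  apply/setP => i; rewrite !inE; case iS: (i \in S); rewrite ?andbF ?andbT //=.
    case iB: (i \in B) => //; first by have := sB i iB; rewrite inE iS.
    by rewrite orbF.
exists (X :\: S); first by rewrite inE; apply/subsetP => i; rewrite !inE => /andP[].
by rewrite -H setID.
Qed.

Lemma famP Sp X : (X \in Fam Sp (hA A)) = [forall S in Sp, ~~ (S \subset phi X)].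
Proof.
rewrite /Fam in_setC; apply/idP/forall_inP => [H S SSp | H].
  apply/negP => sub; move/negP: H; apply; apply/bigcupP; exists S => //; by rewrite /hA inQ keyL.
apply/bigcupP => [[S SSp]]; rewrite /hA inQ keyL; apply/negP; exact: H.
Qed.

Lemma ShE Sp : Sh (Fam Sp (hA A)) = [set Z : {set 'I_n} | [forall S in Sp, ~~ (S \subset Z)]].
Proof.
apply/setP => S; rewrite !inE /shatters; apply/eqP/idP => [H | H].
  have : S :&: A \in powerset S by rewrite inE subsetIl.
  rewrite -H => /imsetP [X XF /eqP]; rewrite eq_sym keyL => sub.
  move: XF; rewrite famP => /forall_inP XF; apply/forall_inP => T TSp.
  apply/negP => TS; have := XF T TSp; by rewrite (subset_trans TS sub).
apply/eqP; rewrite eqEsubset; apply/andP; split.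
  apply/subsetP => Y /imsetP [X _ ->]; by rewrite inE subsetIr.
apply/subsetP => T; rewrite inE => /subsetP TS.
pose Z := [set i in S | (i \in T) == (i \in A)].
apply/imsetP; exists (phi Z).
  rewrite famP phiK; apply/forall_inP => U USp; apply/negP => UZ.
  have := forall_inP H U USp; rewrite (subset_trans UZ) //.
  by apply/subsetP => i; rewrite inE => /andP[].
apply/setP => i; rewrite !inE; case iS: (i \in S); rewrite ?andbF ?andbT /=.
  by case: (i \in T); case: (i \in A).
by case iT: (i \in T) => //; have := TS i iT; rewrite iS.
Qed.

Lemma ext Sp : s_extremal (Fam Sp (hA A)).
Proof.
rewrite /s_extremal ShE.
have -> : [set Z : {set 'I_n} | [forall S in Sp, ~~ (S \subset Z)]] = phi @: Fam Sp (hA A).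
  apply/setP => Z; rewrite -{2}(phiK Z) (mem_imset _ _ phi_inj) famP phiK.
  by rewrite inE.
by rewrite card_imset //; apply: phi_inj.
Qed.

Definition minimals (D : {set {set 'I_n}}) :=
  [set Y : {set 'I_n} | (Y \notin D) && [forall Y' : {set 'I_n}, (Y' \proper Y) ==> (Y' \in D)]].

Lemma minimals_sperner D : sperner (minimals D).
Proof.
move=> S T; rewrite !inE => /andP [SD _] /andP [_ /forallP HT] ST.
apply/eqP; move: SD; apply: contraNT => ne; have := HT S; rewrite properEneq ne ST /=.
by [].
Qed.

Lemma minimalsE (D : {set {set 'I_n}}) : (forall Z Z' : {set 'I_n}, Z' \subset Z -> Z \in D -> Z' \in D) ->
  forall Z, (Z \in D) = [forall Y in minimals D, ~~ (Y \subset Z)].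
Proof.
move=> dc Z; apply/idP/forall_inP => [ZD Y | H].
  rewrite inE => /andP [YD _]; apply: contra YD => YZ; exact: dc YZ ZD.
apply/negPn/negP => ZD.
suff [Y YZ Ym] : exists2 Y : {set 'I_n}, Y \subset Z & Y \in minimals D.
  by have := H Y Ym; rewrite YZ.
have [k Hk] : exists k, #|Z| < k by exists #|Z|.+1.
clear H; move: k Z Hk ZD; elim => [//|k IH] Z Hk ZD.
case: (boolP [forall Y' : {set 'I_n}, (Y' \proper Z) ==> (Y' \in D)]) => [Hm | ].
  by exists Z => //; rewrite inE ZD.
rewrite negb_forall => /existsP [Y']; rewrite negb_imply => /andP [pr Y'D].
have [Y YY' Ym] := IH Y' (leq_trans (proper_card pr) Hk) Y'D.
by exists Y => //; apply: subset_trans YY' (proper_sub pr).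
Qed.

End Aux.

Theorem theorem9 (n : nat) (Sp : {set {set 'I_n}}) (A : {set 'I_n}) :
  sperner Sp ->
  s_extremal (Fam Sp (hA A)) /\
  (Fam Sp (hA A) != [set: {set 'I_n}] ->
   exists F : {set 'I_n},
     F \notin Fam Sp (hA A) /\
     s_extremal (F |: Fam Sp (hA A)) /\
     exists Sp' : {set {set 'I_n}},
       sperner Sp' /\ F |: Fam Sp (hA A) = Fam Sp' (hA A)).
Proof.
move=> spSp; split; first exact: ext.
move=> neq.
have : Sp != set0.
  apply: contra neq => /eqP E; rewrite /Fam E big_set0 setC0 //.
case/set0Pn => S0 S0Sp.
pose D := [set Z : {set 'I_n} | (Z == S0) || [forall S in Sp, ~~ (S \subset Z)]].
have dc : forall Z Z' : {set 'I_n}, Z' \subset Z -> Z \in D -> Z' \in D.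
  move=> Z Z' sZ; rewrite !inE => /orP [/eqP E | /forall_inP H].
    subst Z; set P := (X in _ || X); case: (boolP P) => [_|]; first by rewrite orbT.
    rewrite /P negb_forall_in => /exists_inP [S SSp /negPn SZ']; apply/orP; left.
    have := spSp S S0 SSp S0Sp (subset_trans SZ' sZ) => E; subst S.
    by rewrite eqEsubset sZ SZ'.
  apply/orP; right; apply/forall_inP => S SSp; apply: contra (H S SSp) => SZ'.
  exact: subset_trans SZ' sZ.
have Fam' : phi A S0 |: Fam Sp (hA A) = Fam (minimals D) (hA A).
  apply/setP => X; rewrite in_setU1 !famP -minimalsE // inE.
  congr (_ || _).
  by apply/eqP/eqP => [-> | <-]; rewrite phiK.
exists (phi A S0); split.
  rewrite famP phiK negb_forall_in; apply/exists_inP; by exists S0 => //; rewrite negbK.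
split; first by rewrite Fam'; apply: ext.
exists (minimals D); split => //; exact: minimals_sperner.
Qed.
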